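(* Let $H$ be a subgroup of finite index in a group $G$. A subset $A\subset H$ is small in $H$ if and only if $A$ is small in $G$.
   Context: A subset $L$ of a group $\Gamma$ is large in $\Gamma$ if there is a finite $F\subset\Gamma$ with $\Gamma=FL$. A subset $A\subset\Gamma$ is small in $\Gamma$ if for every large set $L\subset\Gamma$ the set $L\setminus A$ is large in $\Gamma$. *)

(* Defs.v *)
From Stdlib Require Import List.
Import ListNotations.

Record Group := {
  carrier :> Type;
  gmul : carrier -> carrier -> carrier;
  gone : carrier;
  ginv : carrier -> carrier;
  gmul_assoc : forall x y z, gmul x (gmul y z) = gmul (gmul x y) z;
  gmul_1l : forall x, gmul gone x = x;
  gmul_1r : forall x, gmul x gone = x;
  gmul_Vl : forall x, gmul (ginv x) x = gone;
  gmul_Vr : forall x, gmul x (ginv x) = gone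
}.

Arguments gmul {g}.
Arguments gone {g}.
Arguments ginv {g}.

Definition subset_of {G : Group} (A B : G -> Prop) : Prop := forall x, A x -> B x.

Definition is_subgroup {G : Group} (H : G -> Prop) : Prop :=
  H gone /\ (forall x y, H x -> H y -> H (gmul x y)) /\ (forall x, H x -> H (ginv x)).

(* H has finite index in G: G = F H for some finite F (finitely many left cosets). *)
Definition finite_index {G : Group} (H : G -> Prop) : Prop :=
  exists F : list G, forall g : G, exists f h, In f F /\ H h /\ g = gmul f h.

Definition large_in {G : Group} (S L : G -> Prop) : Prop :=
  exists F : list G, (forall f, In f F -> S f) /\
    forall x, S x -> exists f l, In f F /\ L l /\ x = gmul f l.

Definition small_in {G : Group} (S A : G -> Prop) : Prop :=
  forall L : G -> Prop, subset_of L S -> large_in S L ->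
    large_in S (fun x => L x /\ ~ A x).

Definition whole (G : Group) : G -> Prop := fun _ => True.

(* Main.v *)
Require Import Defs.
From Stdlib Require Import List Classical.
Import ListNotations.

Section Aux.
Variable G : Group.

Definition prodl (P Q : list G) : list G :=
  flat_map (fun p => map (fun q => gmul p q) Q) P.

Lemma in_prodl p q P Q : In p P -> In q Q -> In (gmul p q) (prodl P Q).
Proof.
  intros Hp Hq. unfold prodl. apply in_flat_map. exists p. split; auto.
  apply in_map. auto.
Qed.

Lemma filter_ex (P : G -> Prop) (l : list G) :
  exists l', forall x, In x l' <-> In x l /\ P x.
Proof.
  induction l as [|a l [l' IH]].
  - exists []. simpl. tauto.
  - destruct (classic (P a)) as [Ha|Ha].
    + exists (a :: l'). intros x. simpl. rewrite IH. split.
      * intros [<-|[]]; auto.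
      * intros [[<-|Hx] Px]; auto.
    + exists l'. intros x. simpl. rewrite IH. split.
      * intros []; auto.
      * intros [[<-|Hx] Px]; auto. contradiction.
Qed.

Lemma cancel_r (x e m : G) : x = gmul e m -> e = gmul x (ginv m).
Proof.
  intros ->. rewrite <- gmul_assoc, gmul_Vr, gmul_1r. reflexivity.
Qed.

Lemma large_restrict (H M : G -> Prop) :
  is_subgroup H -> subset_of M H -> large_in (whole G) M -> large_in H M.
Proof.
  intros [H1 [Hm Hi]] MH [E [_ HE]].
  destruct (filter_ex H E) as [E' HE'].
  exists E'. split.
  - intros f Hf. apply HE' in Hf. tauto.
  - intros x Hx. destruct (HE x I) as [e [m [He [Mm ->]]]].
    exists e, m. repeat split; auto. apply HE'. split; auto.
    rewrite (cancel_r (gmul e m) e m eq_refl). apply Hm; auto.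
Qed.

Lemma large_extend (H M : G -> Prop) :
  finite_index H -> large_in H M -> large_in (whole G) M.
Proof.
  intros [F HF] [K [_ HK]].
  exists (prodl F K). split; [intros; exact I|].
  intros x _. destruct (HF x) as [f [h [Hf [Hh ->]]]].
  destruct (HK h Hh) as [k [m [Hk [Mm ->]]]].
  exists (gmul f k), m. repeat split; auto using in_prodl.
  apply gmul_assoc.
Qed.

Lemma normalize_F (H : G -> Prop) :
  is_subgroup H -> finite_index H ->
  exists F : list G, (forall g : G, exists f h, In f F /\ H h /\ g = gmul f h)
    /\ (forall f, In f F -> H f -> f = gone).
Proof.
  intros [H1 [Hm Hi]] [F HF].
  assert (exists F', (forall f, In f F -> H f -> forall h, H h ->
                         exists f' h', In f' F' /\ H h' /\ gmul f h = gmul f' h')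
                     /\ (forall f, In f F -> ~ H f -> In f F')
                     /\ (forall f, In f F' -> H f -> f = gone)) as [F' [A1 [A2 A3]]].
  { clear HF. induction F as [|a F [F' [B1 [B2 B3]]]].
    - exists []. simpl. repeat split; tauto.
    - destruct (classic (H a)) as [Ha|Ha].
      + exists (gone :: F'). repeat split.
        * intros f [<-|Hf] Hfh h Hh.
          -- exists gone, (gmul a h). repeat split; simpl; auto.
             rewrite gmul_1l; reflexivity.
          -- destruct (B1 f Hf Hfh h Hh) as [f' [h' [? [? ?]]]].
             exists f', h'. simpl. auto.
        * intros f [<-|Hf] Hn; [contradiction|]. simpl; auto.
        * intros f [<-|Hf] Hfh; auto.
      + exists (a :: F'). repeat split.
        * intros f [<-|Hf] Hfh h Hh; [contradiction|].
          destruct (B1 f Hf Hfh h Hh) as [f' [h' [? [? ?]]]].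
          exists f', h'. simpl. auto.
        * intros f [<-|Hf] Hn; simpl; auto.
        * intros f [<-|Hf] Hfh; [contradiction|]. auto. }
  exists F'. split; auto.
  intros g. destruct (HF g) as [f [h [Hf [Hh ->]]]].
  destruct (classic (H f)) as [Hfh|Hn].
  - destruct (A1 f Hf Hfh h Hh) as [f' [h' [? [? ?]]]]. exists f', h'. auto.
  - exists f, h. auto.
Qed.

End Aux.

Theorem lemma5p7 (G : Group) (H : G -> Prop) (A : G -> Prop) :
  is_subgroup H -> finite_index H -> subset_of A H ->
  (small_in H A <-> small_in (whole G) A).
Proof.
  intros Hs Hfi AH. pose proof Hs as Hs'. destruct Hs' as [H1 [Hm Hi]].
  split.
  - intros Hsm L _ [E [_ HE]].
    destruct (normalize_F G H Hs Hfi) as [F [HF HF1]].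
    set (L' := fun h => H h /\ exists f, In f F /\ L (gmul f h)).
    assert (LL' : large_in H L').
    { apply large_restrict; auto.
      - intros x [? _]; auto.
      - exists (prodl G E F). split; [intros; exact I|].
        intros x _. destruct (HE x I) as [e [l [He [Ll ->]]]].
        destruct (HF l) as [f [h [Hf [Hh ->]]]].
        exists (gmul e f), h. repeat split; auto using in_prodl.
        + exists f. auto.
        + apply gmul_assoc. }
    assert (L'H : subset_of L' H) by (intros x [? _]; auto).
    destruct (large_extend G H _ Hfi (Hsm L' L'H LL')) as [K [_ HK]].
    exists (prodl G K (map ginv F)). split; [intros; exact I|].
    intros x _. destruct (HK x I) as [k [h [Hk [[[Hh [f [Hf Lfh]]] NA] ->]]]].
    exists (gmul k (ginv f)), (gmul f h). repeat split; auto.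
    + apply in_prodl; auto. apply in_map; auto.
    + intros Afh. apply NA.
      assert (Hf' : H f).
      { rewrite (cancel_r G (gmul f h) f h eq_refl). apply Hm; auto. }
      rewrite (HF1 f Hf Hf') in Afh. rewrite gmul_1l in Afh. exact Afh.
    + rewrite gmul_assoc. f_equal. rewrite <- gmul_assoc, gmul_Vl, gmul_1r.
      reflexivity.
  - intros Hsm L LH HL.
    apply large_restrict; auto.
    + intros x [Lx _]; auto.
    + apply Hsm; [intros ? ?; exact I|]. eapply large_extend; eauto.
Qed.
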